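(* There exist unit vectors $\psi_1, \psi_2, \psi_3, \psi_4 \in \mathbb{C}^4$ such that $|\langle \psi_i, \psi_j\rangle| \le \tfrac{2}{3}$ for all $i \ne j$, and yet the set $\{\psi_1\psi_1^*, \psi_2\psi_2^*, \psi_3\psi_3^*, \psi_4\psi_4^*\}$ of rank-one density matrices is not antidistinguishable. Consequently, the statement ''for every $d\ge 2$, any $d$ unit vectors in $\mathbb{C}^d$ with pairwise inner products of absolute value at most $(d-2)/(d-1)$ form an antidistinguishable set'' is false (it fails for $d=4$).
   Context: A density matrix on $\mathbb{C}^d$ is a positive semidefinite $d\times d$ complex matrix of trace $1$. A set of density matrices $\{\rho_1,\ldots,\rho_n\}$ on $\mathbb{C}^d$ is called antidistinguishable if there exist positive semidefinite $d\times d$ matrices $N_1,\ldots,N_n$ with $\sum_{i=1}^n N_i = I$ (the identity) and $\operatorname{Tr}(N_i \rho_i) = 0$ for every $i \in \{1,\ldots,n\}$. For a unit vector $\psi$, $\psi\psi^*$ denotes the rank-one projection onto $\psi$, and $\langle \cdot,\cdot\rangle$ is the standard inner product on $\mathbb{C}^4$. *)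

(* Defs.v *)
From HB Require Import structures.
From mathcomp Require Import all_boot all_order all_algebra.
From mathcomp Require Import complex.
From mathcomp Require Import Rstruct.
Set Implicit Arguments. Unset Strict Implicit. Unset Printing Implicit Defensive.
Import Order.TTheory GRing.Theory Num.Theory.
Local Open Scope ring_scope.

(* The complex numbers: R[i] over Stdlib's real numbers R (a realType,
   hence a real closed field, so R[i] is a numClosedFieldType). *)
Notation Cplx := (Rdefinitions.R[i]).

Definition mxH (C : numClosedFieldType) m n (A : 'M[C]_(m, n)) : 'M[C]_(n, m) :=
  (map_mx Num.conj A)^T.

Definition psd (C : numClosedFieldType) d (A : 'M[C]_d) : Prop :=
  mxH A = A /\ forall v : 'cV[C]_d, 0 <= (mxH v *m A *m v) 0 0.

Definition density (C : numClosedFieldType) d (A : 'M[C]_d) : Prop :=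
  psd A /\ \tr A = 1.

Definition inner (C : numClosedFieldType) d (u v : 'cV[C]_d) : C :=
  \sum_k Num.conj (u k 0) * v k 0.

Definition proj (C : numClosedFieldType) d (psi : 'cV[C]_d) : 'M[C]_d :=
  psi *m mxH psi.

Definition antidistinguishable (C : numClosedFieldType) n d
    (rho : 'I_n -> 'M[C]_d) : Prop :=
  exists N : 'I_n -> 'M[C]_d,
    (forall i, psd (N i)) /\ \sum_(i < n) N i = 1%:M /\
    (forall i, \tr (N i *m rho i) = 0).

(* Main.v *)
Require Import Defs.
From HB Require Import structures.
From mathcomp Require Import all_boot all_order all_algebra.
From mathcomp Require Import complex Rstruct.
From mathcomp Require Import ring zify.
Set Implicit Arguments. Unset Strict Implicit. Unset Printing Implicit Defensive.
Import Order.TTheory GRing.Theory Num.Theory.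
Local Open Scope ring_scope.

Lemma conj_i_exp (C : numClosedFieldType) (n : nat) : ('i ^+ n : C)^* = 'i ^+ (3 * n).
Proof. by rewrite rmorphXn /= conjCi exprM exprSr sqrCi mulN1r. Qed.

Lemma i_exp4 (C : numClosedFieldType) (n : nat) : ('i ^+ (4 * n) : C) = 1.
Proof. by rewrite exprM (_ : 4 = 2 * 2)%N // exprM sqrCi sqrrN expr1n expr1n. Qed.

Definition sv (C : numClosedFieldType) (j : nat) : C :=
  match j with 0 => 22%:R / 27%:R | 2 => 7%:R / 27%:R | 3 => 14%:R / 27%:R | _ => 0 end.
Definition uv (C : numClosedFieldType) (j : nat) : C :=
  match j with 0 => 3%:R | 2 => 1 | 3 => 2%:R | _ => 0 end.
Definition vv (C : numClosedFieldType) (j : nat) : C :=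
  match j with 2 => 1 | 3 => -1 | _ => 0 end.
Definition yv (C : numClosedFieldType) (j : nat) : C :=
  match j with 0 => 22%:R / 729%:R | 2 => - (7%:R / 729%:R)
          | 3 => - (14%:R / 729%:R) | _ => 0 end.
Definition cv (C : numClosedFieldType) (m : nat) : C :=
  match m with 0 => 154%:R / 2187%:R | _ => 14%:R / 2187%:R end.

Lemma conj_ratC (C : numClosedFieldType) (a b : nat) : ((a%:R / b%:R : C))^* = a%:R / b%:R.
Proof. by rewrite rmorphM /= fmorphV /= !conjC_nat. Qed.

Ltac conjs := rewrite ?rmorphN ?conj_ratC ?conjC_nat ?rmorph0 ?rmorph1.

Lemma conj_sv C j : (sv C j)^* = sv C j.
Proof. by case: j => [|[|[|[|j]]]] /=; conjs. Qed.
Lemma conj_uv C j : (uv C j)^* = uv C j.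
Proof. by case: j => [|[|[|[|j]]]] /=; conjs. Qed.
Lemma conj_vv C j : (vv C j)^* = vv C j.
Proof. by case: j => [|[|[|[|j]]]] /=; conjs. Qed.

Definition psiC (C : numClosedFieldType) (k : 'I_4) : 'cV[C]_4 :=
  \col_j ('i ^+ (j * k) * sv C j).
Definition YC (C : numClosedFieldType) : 'M[C]_4 :=
  \matrix_(a, b) ((a == b)%:R * yv C a).
Definition wC (C : numClosedFieldType) (k : 'I_4) (m : 'I_2) : 'cV[C]_4 :=
  \col_j ('i ^+ (j * k) * (if m == 0 :> nat then uv C j else vv C j)).

Lemma table (C : numClosedFieldType) (a b : 'I_4) :
  sv C a * sv C b = (a == b)%:R * yv C a + cv C 0 * (uv C a * uv C b)
     + cv C 1 * (vv C a * vv C b).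
Proof.
by case: a => [[|[|[|[|a]]]] Ha] //; case: b => [[|[|[|[|b]]]] Hb] //=;
  rewrite ?mul0r ?mulr0 ?add0r ?addr0 ?mul1r; field.
Qed.

Lemma decomp (C : numClosedFieldType) (k : 'I_4) :
  proj (psiC C k) = YC C + \sum_(m < 2) cv C m *: proj (wC C k m).
Proof.
apply/matrixP => a b.
rewrite /proj !mxE big_ord1 big_ord_recr big_ord1 /= !mxE !big_ord1 !mxE.
rewrite /= !rmorphM /= !conj_i_exp conj_sv conj_uv conj_vv.
pose E : C := 'i ^+ (a * k) * 'i ^+ (3 * (b * k)).
have -> : 'i ^+ (a * k) * sv C a * ('i ^+ (3 * (b * k)) * sv C b)
    = E * (sv C a * sv C b) by rewrite /E; ring.
rewrite table /= !mulrDr.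
have -> : E * ((a == b)%:R * yv C a) = (a == b)%:R * yv C a.
  have [eab|neab] := eqVneq a b; last by rewrite !mul0r mulr0.
  rewrite /E eab -exprD (_ : (b * k + 3 * (b * k) = 4 * (b * k))%N); last by lia.
  by rewrite i_exp4 mul1r.
rewrite /E; ring.
Qed.

Definition gC (C : numClosedFieldType) (m : nat) : C :=
  \sum_(j < 4) 'i ^+ (j * m) * sv C j ^+ 2.

Definition ph4 (C : numClosedFieldType) (n : nat) : C :=
  match n with 0 => 1 | 1 => 'i | 2 => -1 | _ => - 'i end.

Lemma ipow (C : numClosedFieldType) n : ('i ^+ n : C) = ph4 C (n %% 4).
Proof.
rewrite {1}(divn_eq n 4) exprD mulnC i_exp4 mul1r.
have : (n %% 4 < 4)%N by rewrite ltn_mod.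
case: (n %% 4)%N => [|[|[|[|m]]]] // _ /=; try by rewrite ?expr0 ?expr1.
- by rewrite sqrCi.
- by rewrite exprS sqrCi mulrN1.
Qed.


Lemma ratle (C : numClosedFieldType) (p q r t : nat) : (0 < q)%N -> (0 < t)%N ->
  (p * t <= r * q)%N -> (p%:R / q%:R <= r%:R / t%:R :> C).
Proof.
move=> q0 t0 h; rewrite ler_pdivrMr ?ltr0n // mulrAC ler_pdivlMr ?ltr0n //.
by rewrite -!natrM ler_nat.
Qed.

Lemma Lbound (C : numClosedFieldType) (x a b : C) : a^* = a -> b^* = b ->
  x = a + b * 'i -> a ^+ 2 + b ^+ 2 <= 4%:R / 9%:R -> `|x| <= 2%:R / 3%:R.
Proof.
move=> ha hb -> h.
have n2 : (2%:R / 3%:R : C) ^+ 2 = 4%:R / 9%:R by field.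
rewrite -ler_sqr ?nnegrE ?normr_ge0 ?divr_ge0 ?ler0n // normCK n2.
rewrite rmorphD rmorphM /= ha hb conjCi.
have -> : (a + b * 'i) * (a + b * - 'i) = a ^+ 2 - b ^+ 2 * 'i ^+ 2 by ring.
by rewrite sqrCi mulrN1 opprK.
Qed.

Lemma gC0 C : gC C 0 = 1.
Proof. by rewrite /gC !big_ord_recr big_ord0 /= !ipow /=; field. Qed.

Lemma gC_bound (C : numClosedFieldType) m : (0 < m < 4)%N -> `|gC C m| <= 2%:R / 3%:R.
Proof.
case: m => [|[|[|[|m]]]] //= _.
- apply: (@Lbound _ _ (435%:R / 729%:R) (- (196%:R / 729%:R))).
  + by rewrite conj_ratC.
  + by rewrite rmorphN /= conj_ratC.
  + by rewrite /gC !big_ord_recr big_ord0 /= !ipow /=; field.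
  + rewrite -subr_ge0 (_ : _ - _ = 5%:R * 29%:R * 59%:R / 27%:R ^+ 4); last by field.
    by rewrite divr_ge0 ?exprn_ge0 ?mulr_ge0 ?ler0n.
- apply: (@Lbound _ _ (337%:R / 729%:R) 0).
  + by rewrite conj_ratC.
  + by rewrite rmorph0.
  + by rewrite /gC !big_ord_recr big_ord0 /= !ipow /=; field.
  + rewrite -subr_ge0 (_ : _ - _ = 149%:R * 823%:R / 27%:R ^+ 4); last by field.
    by rewrite divr_ge0 ?exprn_ge0 ?mulr_ge0 ?ler0n.
- apply: (@Lbound _ _ (435%:R / 729%:R) (196%:R / 729%:R)).
  + by rewrite conj_ratC.
  + by rewrite conj_ratC.
  + by rewrite /gC !big_ord_recr big_ord0 /= !ipow /=; field.
  + rewrite -subr_ge0 (_ : _ - _ = 5%:R * 29%:R * 59%:R / 27%:R ^+ 4); last by field.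
    by rewrite divr_ge0 ?exprn_ge0 ?mulr_ge0 ?ler0n.
Qed.

Lemma ipow_mod (C : numClosedFieldType) j n : ('i ^+ (j * n) : C) = 'i ^+ (j * (n %% 4)).
Proof.
rewrite {1}(divn_eq n 4) mulnDr exprD.
by rewrite (_ : (j * (n %/ 4 * 4) = 4 * (j * (n %/ 4)))%N) ?i_exp4 ?mul1r //; lia.
Qed.

Lemma inner_g (C : numClosedFieldType) (k l : 'I_4) :
  inner (psiC C k) (psiC C l) = gC C ((3 * k + l) %% 4).
Proof.
rewrite /inner /gC; apply: eq_bigr => j _; rewrite !mxE rmorphM /= conj_i_exp conj_sv.
rewrite -ipow_mod (_ : (j * (3 * k + l) = 3 * (j * k) + j * l)%N); last by lia.
by rewrite exprD; ring.
Qed.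

Lemma trY (C : numClosedFieldType) : 0 < \tr (YC C).
Proof.
rewrite /mxtrace !big_ord_recr big_ord0 /= !mxE /=.
rewrite (_ : _ + _ = 1 / 729%:R); last by field.
by rewrite divr_gt0 ?ltr0n.
Qed.

Lemma tr_psd_proj (C : numClosedFieldType) d (N : 'M[C]_d) (w : 'cV[C]_d) :
  psd N -> 0 <= \tr (N *m proj w).
Proof.
case=> _ H; rewrite /proj mulmxA mxtrace_mulC mulmxA /mxtrace big_ord1.
exact: H.
Qed.

Lemma not_ad (C : numClosedFieldType) n d m (rho : 'I_n -> 'M[C]_d)
  (Y : 'M[C]_d) (c : 'I_m -> C) (w : 'I_n -> 'I_m -> 'cV[C]_d) :
  0 < \tr Y -> (forall k, 0 <= c k) ->
  (forall i, rho i = Y + \sum_k c k *: proj (w i k)) ->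
  ~ antidistinguishable rho.
Proof.
move=> trY cge0 rhoE [N [Npsd [Nsum Ntr]]].
have key i : \tr (N i *m Y) <= \tr (N i *m rho i).
  rewrite rhoE mulmxDr mxtraceD lerDl mulmx_sumr raddf_sum /=.
  apply: sumr_ge0 => k _; rewrite -scalemxAr mxtraceZ.
  by apply: mulr_ge0; [exact: cge0 | exact: tr_psd_proj].
have : \tr Y <= 0.
  rewrite -[Y]mul1mx -Nsum mulmx_suml raddf_sum /=.
  apply: (@le_trans _ _ (\sum_(i < n) \tr (N i *m rho i))).
    by apply: ler_sum => i _; exact: key.
  by rewrite big1 // => i _; exact: Ntr.
by move=> /(lt_le_trans trY); rewrite ltxx.
Qed.

Lemma main_generic (C : numClosedFieldType) :
  (forall i, inner (psiC C i) (psiC C i) = 1) /\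
  (forall i j, i != j -> `|inner (psiC C i) (psiC C j)| <= 2%:R / 3%:R) /\
  ~ antidistinguishable (fun i => proj (psiC C i)).
Proof.
split; [|split].
- move=> i; rewrite inner_g (_ : (3 * i + i = i * 4)%N) ?modnMl ?gC0 //; lia.
- move=> i j ij; rewrite inner_g; apply: gC_bound.
  by case: i ij => [[|[|[|[|i]]]] Hi] //; case: j => [[|[|[|[|j]]]] Hj].
- apply: (@not_ad C 4 4 2 _ (YC C) (fun m => cv C m) (wC C)).
  + exact: trY.
  + by case=> [[|[|m]] Hm] /=; rewrite divr_ge0 ?ler0n.
  + move=> i; exact: decomp.
Qed.

Theorem mainTheorem2 :
  (exists psi : 'I_4 -> 'cV[Cplx]_4,
      (forall i, inner (psi i) (psi i) = 1) /\
      (forall i j, i != j -> `|inner (psi i) (psi j)| <= 2%:R / 3%:R) /\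
      ~ antidistinguishable (fun i => proj (psi i)))
  /\
  ~ (forall d : nat, (2 <= d)%N ->
       forall psi : 'I_d -> 'cV[Cplx]_d,
         (forall i, inner (psi i) (psi i) = 1) ->
         (forall i j, i != j ->
            `|inner (psi i) (psi j)| <= (d - 2)%:R / (d - 1)%:R) ->
         antidistinguishable (fun i => proj (psi i))).
Proof.
have [h1 [h2 h3]] := main_generic Cplx.
split.
  by exists (psiC Cplx).
move=> H; apply: h3; exact: (H 4%N isT (psiC Cplx) h1 h2).
Qed.
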